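(* Suppose every selected context vector takes one of finitely many values $x_{(1)},\dots,x_{(N)}\in\mathbb R^d$, and let $A_t=I_d+\sum_{\tau=1}^tx_{\tau,a_\tau}x_{\tau,a_\tau}^\top$ (as in the AdaLinUCB algorithm). For $n=1,\dots,N$ let $m_{t,(n)}=\sum_{\tau=1}^t\mathbb 1\{x_{\tau,a_\tau}=x_{(n)}\}$. Then for every $t\ge1$ and every $n=1,\dots,N$, $$\|x_{(n)}\|_{A_{t-1}^{-1}}\le\sqrt{\frac{d}{m_{t-1,(n)}}}.$$
   Context: For a positive definite matrix $A$, $\|x\|_A=\sqrt{x^\top Ax}$. $x_{\tau,a_\tau}$ is the context vector of the arm selected at slot $\tau$; $A_0=I_d$. *)

(* Defs.v *)
From mathcomp Require Import all_boot all_order all_algebra.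
Set Implicit Arguments. Unset Strict Implicit. Unset Printing Implicit Defensive.
Import Order.TTheory GRing.Theory Num.Theory.
Local Open Scope ring_scope.

Definition wnorm (R : rcfType) (d : nat) (M : 'M[R]_d) (v : 'cV[R]_d) : R :=
  Num.sqrt ((v^T *m M *m v) ord0 ord0).

(* Selected context vectors: xsel tau is x_{tau+1, a_{tau+1}} (0-based slots).
   Agram xsel t = A_t = I_d + sum_{tau=1}^t x_tau x_tau^T. *)
Definition Agram (R : rcfType) (d : nat) (xsel : nat -> 'cV[R]_d) (t : nat)
  : 'M[R]_d :=
  1%:M + \sum_(tau < t) (xsel tau *m (xsel tau)^T).

Definition mcount (R : rcfType) (d N : nat) (xsel : nat -> 'cV[R]_d)
  (xs : 'I_N -> 'cV[R]_d) (t : nat) (n : 'I_N) : nat :=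
  \sum_(tau < t) (xsel tau == xs n).

(* Main.v *)
Require Import Defs.
From mathcomp Require Import all_boot all_order all_algebra.
From mathcomp Require Import ring lra.
Set Implicit Arguments. Unset Strict Implicit. Unset Printing Implicit Defensive.
Import Order.TTheory GRing.Theory Num.Theory.
Local Open Scope ring_scope.

Definition dotc (R : rcfType) d (x u : 'cV[R]_d) : R := \sum_i x i 0 * u i 0.

Lemma dotcC (R : rcfType) d (x u : 'cV[R]_d) : dotc x u = dotc u x.
Proof. by apply: eq_bigr => i _; rewrite mulrC. Qed.

Lemma dotc_ge0 (R : rcfType) d (u : 'cV[R]_d) : 0 <= dotc u u.
Proof. by apply: sumr_ge0 => i _; rewrite -expr2 sqr_ge0. Qed.

Lemma quad_mx (R : rcfType) d (x u : 'cV[R]_d) : (u^T *m x) 0 0 = dotc x u.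
Proof. rewrite mxE dotcC; apply: eq_bigr => i _; by rewrite mxE. Qed.

Lemma quadA (R : rcfType) d (xsel : nat -> 'cV[R]_d) t (u : 'cV[R]_d) :
  (u^T *m Agram xsel t *m u) 0 0 =
  dotc u u + \sum_(tau < t) (dotc (xsel tau) u) ^+ 2.
Proof.
rewrite /Agram mulmxDr mulmxDl mulmx1 mxE quad_mx; congr (_ + _).
rewrite mulmx_sumr mulmx_suml summxE; apply: eq_bigr => tau _.
rewrite !mulmxA -(mulmxA (u^T *m xsel tau)) mxE big_ord1 quad_mx.
have -> : ((xsel tau)^T *m u) 0 0 = dotc (xsel tau) u.
  by rewrite mxE; apply: eq_bigr => i _; rewrite mxE.
by rewrite expr2.
Qed.

Theorem lemma4 (R : rcfType) (d N : nat) (xs : 'I_N -> 'cV[R]_d)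
  (xsel : nat -> 'cV[R]_d)
  (hfin : forall tau : nat, exists n : 'I_N, xsel tau = xs n)
  (t : nat) (ht : (1 <= t)%N) (n : 'I_N)
  (hm : (0 < mcount xsel xs t.-1 n)%N) :
  wnorm (invmx (Agram xsel t.-1)) (xs n)
    <= Num.sqrt (d%:R / (mcount xsel xs t.-1 n)%:R).
Proof.
set A := Agram xsel t.-1; set v := xs n; set m := mcount xsel xs t.-1 n.
have Au : A \in unitmx.
  rewrite -row_free_unit; apply: inj_row_free => r hr.
  have h0 : (r^T^T *m A *m r^T) 0 0 = 0 by rewrite trmxK hr mul0mx mxE.
  rewrite quadA in h0.
  have hd : dotc r^T r^T = 0.
    apply/eqP; rewrite eq_le dotc_ge0 andbT -h0 lerDl.
    by apply: sumr_ge0 => i _; rewrite sqr_ge0.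
  apply/matrixP => i j; rewrite (ord1 i) mxE.
  move/eqP: hd; rewrite psumr_eq0 => [/allP/(_ j (mem_index_enum _))|k _].
    by rewrite implyTb !mxE mulf_eq0 orbb => /eqP.
  by rewrite -expr2 sqr_ge0.
have AT : A^T = A.
  rewrite /A /Agram linearD /= trmx1 linear_sum /=; congr (_ + _).
  by apply: eq_bigr => tau _; rewrite trmx_mul trmxK.
set w := invmx A *m v.
have Aw : A *m w = v by rewrite /w mulKVmx.
set s := dotc w v.
have hs : (v^T *m invmx A *m v) 0 0 = s by rewrite -mulmxA quad_mx.
have hs2 : s = dotc w w + \sum_(tau < t.-1) (dotc (xsel tau) w) ^+ 2.
  by rewrite -quadA -/A -hs -Aw trmx_mul AT mulmxK // mulmxA.
have hsum : m%:R * s ^+ 2 <= \sum_(tau < t.-1) (dotc (xsel tau) w) ^+ 2.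
  rewrite /m /mcount natr_sum mulr_suml; apply: ler_sum => tau _.
  case: eqP => [->|_]; first by rewrite mul1r /s dotcC.
  by rewrite mul0r sqr_ge0.
have s0 : 0 <= s by rewrite hs2 addr_ge0 ?dotc_ge0 // sumr_ge0 // => i _; rewrite sqr_ge0.
have sm : m%:R * s ^+ 2 <= s by apply: (le_trans hsum); rewrite [X in _ <= X]hs2 lerDr dotc_ge0.
have m0 : 0 < m%:R :> R by rewrite ltr0n.
have s1 : s <= m%:R^-1.
  have [->|sp] := eqVneq s 0; first by rewrite invr_ge0 ltW.
  have sp' : 0 < s by rewrite lt_def sp s0.
  rewrite -(ler_pM2l m0) mulfV ?gt_eqF // -(ler_pM2r sp') mul1r.
  by rewrite -mulrA -expr2.
rewrite /wnorm -/A hs ler_wsqrtr //.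
have [d0|dpos] := posnP d.
  rewrite d0 mul0r /s /dotc big_pred0 // => i.
  by have := ltn_ord i; rewrite {2}d0.
apply: (le_trans s1); rewrite -[X in X <= _]mul1r ler_wpM2r ?invr_ge0 ?ler1n ?ltW //.
Qed.
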